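(* $\{\delta\in N:\delta^2=-4,\ \delta/2\in N^*\}=\{r+\rho(r):r\in N,\ r^2=-2\}.$
   Context: Lattices: $U$ has Gram matrix $\begin{pmatrix}0&1\\1&0\end{pmatrix}$; $D_4$ negative definite; $U(2)$ is $U$ with doubled form. $N=U\oplus U(2)\oplus D_4\oplus D_4$, $N^*$ its dual. $\rho=\rho_1\oplus\rho_0\oplus\rho_0\in O(N)$, where for $D_4=\{x\in\mathbb Z^4:\sum x_i\equiv0\bmod 2\}$ (negative standard inner product) $\rho_0(x_1,x_2,x_3,x_4)=(x_2,-x_1,x_4,-x_3)$, and for standard hyperbolic bases $e,f$ of $U$, $e',f'$ of $U(2)$, $\rho_1(e)=-e-e'$, $\rho_1(f)=f-f'$, $\rho_1(e')=e'+2e$, $\rho_1(f')=2f-f'$. $\rho$ acts trivially on $N^*/N$. *)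

(* Defs.v *)
From HB Require Import structures.
From mathcomp Require Import all_boot all_order all_algebra.
Set Implicit Arguments. Unset Strict Implicit. Unset Printing Implicit Defensive.
Import Order.TTheory GRing.Theory Num.Theory.
Local Open Scope ring_scope.

(* Coordinates of the ambient Z^12 of N = U (+) U(2) (+) D4 (+) D4:
   index 0 : e, 1 : f            (standard hyperbolic basis of U)
   index 2 : e', 3 : f'          (standard hyperbolic basis of U(2))
   indices 4..7  : first D4  (as a sublattice of Z^4, negative standard form)
   indices 8..11 : second D4. *)

Definition coord (v : 'rV[int]_12) (k : nat) : int := v 0 (inord k).

Definition gramN : 'M[int]_12 :=
  \matrix_(i < 12, j < 12)
    match nat_of_ord i, nat_of_ord j with
    | 0, 1 | 1, 0 => 1
    | 2, 3 | 3, 2 => 2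
    | _, _ => if (4 <= i)%N && (i == j) then -1 else 0
    end.

Definition bN (x y : 'rV[int]_12) : int := (x *m gramN *m y^T) 0 0.

Definition inN (x : 'rV[int]_12) : Prop :=
  (2 %| coord x 4 + coord x 5 + coord x 6 + coord x 7)%Z /\
  (2 %| coord x 8 + coord x 9 + coord x 10 + coord x 11)%Z.

Definition toQ (x : 'rV[int]_12) : 'rV[rat]_12 := map_mx (fun z : int => z%:~R) x.
Definition bQ (v w : 'rV[rat]_12) : rat :=
  (v *m map_mx (fun z : int => z%:~R) gramN *m w^T) 0 0.
Definition inNdual (v : 'rV[rat]_12) : Prop :=
  forall x : 'rV[int]_12, inN x -> exists z : int, bQ v (toQ x) = z%:~R.

(* rho = rho_1 (+) rho_0 (+) rho_0.
   rho_1(a e + b f + c e' + d f') = (-a+2c) e + (b+2d) f + (-a+c) e' + (-b-d) f'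
   (from rho_1 e = -e-e', rho_1 f = f-f', rho_1 e' = e'+2e, rho_1 f' = 2f-f'),
   rho_0(x1,x2,x3,x4) = (x2,-x1,x4,-x3). *)
Definition rho (v : 'rV[int]_12) : 'rV[int]_12 :=
  \row_(i < 12)
    match nat_of_ord i with
    | 0 => - coord v 0 + 2 * coord v 2
    | 1 => coord v 1 + 2 * coord v 3
    | 2 => - coord v 0 + coord v 2
    | 3 => - coord v 1 - coord v 3
    | 4 => coord v 5
    | 5 => - coord v 4
    | 6 => coord v 7
    | 7 => - coord v 6
    | 8 => coord v 9
    | 9 => - coord v 8
    | 10 => coord v 11
    | _ => - coord v 10
    end.

(* Main.v *)
Require Import Defs.
From HB Require Import structures.
From mathcomp Require Import all_boot all_order all_algebra.
From mathcomp Require Import ring lra zify.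
Import Order.TTheory GRing.Theory Num.Theory.
Local Open Scope ring_scope.


Lemma sum12 (F : 'I_12 -> int) : \sum_(i < 12) F i =
  F (inord 0) + F (inord 1) + F (inord 2) + F (inord 3) + F (inord 4) + F (inord 5)
  + F (inord 6) + F (inord 7) + F (inord 8) + F (inord 9) + F (inord 10) + F (inord 11).
Proof.
have -> : \sum_(i < 12) F i = \sum_(0 <= k < 12) F (inord k).
  by rewrite big_mkord; apply: eq_bigr => i _; rewrite inord_val.
rewrite /index_iota /= !big_cons big_nil; ring.
Qed.

Lemma inord_eqE (m n : nat) : (m < 12)%N -> (n < 12)%N ->
  (inord m == inord n :> 'I_12) = (m == n).
Proof. by move=> hm hn; rewrite -(inj_eq val_inj) /= !inordK. Qed.

Notation c := Defs.coord.
Definition bF (x y : 'rV[int]_12) : int :=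
  c x 0 * c y 1 + c x 1 * c y 0 + 2 * (c x 2 * c y 3 + c x 3 * c y 2)
  - (c x 4 * c y 4 + c x 5 * c y 5 + c x 6 * c y 6 + c x 7 * c y 7
     + c x 8 * c y 8 + c x 9 * c y 9 + c x 10 * c y 10 + c x 11 * c y 11).

Definition gent (m n : nat) : int :=
    match m, n with
    | 0, 1 | 1, 0 => 1
    | 2, 3 | 3, 2 => 2
    | _, _ => if (4 <= m)%N && (m == n) then -1 else 0
    end.
Lemma gramE m n : (m < 12)%N -> (n < 12)%N -> gramN (inord m) (inord n) = gent m n.
Proof. by move=> hm hn; rewrite mxE !inordK // inord_eqE. Qed.
Lemma xE (x : 'rV[int]_12) k : x 0 (inord k) = Defs.coord x k. Proof. by []. Qed.
Arguments Defs.coord : simpl never.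

Lemma bN_formula x y : bN x y = bF x y.
Proof.
rewrite /bN !mxE !sum12 !mxE.
rewrite !sum12 !gramE // !xE /gent /=.

rewrite /bF /Defs.coord; ring.
Qed.

Definition rhoc (v : 'rV[int]_12) (n : nat) : int :=
    match n with
    | 0 => - c v 0 + 2 * c v 2
    | 1 => c v 1 + 2 * c v 3
    | 2 => - c v 0 + c v 2
    | 3 => - c v 1 - c v 3
    | 4 => c v 5
    | 5 => - c v 4
    | 6 => c v 7
    | 7 => - c v 6
    | 8 => c v 9
    | 9 => - c v 8
    | 10 => c v 11
    | _ => - c v 10
    end.

Lemma coord_row (f : nat -> int) k : (k < 12)%N -> c (\row_(i < 12) f i) k = f k.
Proof. by move=> hk; rewrite /Defs.coord mxE inordK. Qed.

Lemma coord_rho v k : (k < 12)%N -> c (rho v) k = rhoc v k.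
Proof. by move=> hk; rewrite /rho /Defs.coord mxE inordK. Qed.

Lemma coordD u v k : c (u + v) k = c u k + c v k.
Proof. by rewrite /Defs.coord mxE. Qed.

Lemma bN_rho r : bN (r + rho r) (r + rho r) = 2 * bN r r.
Proof. rewrite !bN_formula /bF !coordD !coord_rho // /rhoc; ring. Qed.

Lemma eq12 (u v : 'rV[int]_12) :
  c u 0 = c v 0 -> c u 1 = c v 1 -> c u 2 = c v 2 -> c u 3 = c v 3 ->
  c u 4 = c v 4 -> c u 5 = c v 5 -> c u 6 = c v 6 -> c u 7 = c v 7 ->
  c u 8 = c v 8 -> c u 9 = c v 9 -> c u 10 = c v 10 -> c u 11 = c v 11 -> u = v.
Proof.
move=> h0 h1 h2 h3 h4 h5 h6 h7 h8 h9 h10 h11; apply/rowP => i.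
case: i => k hk; rewrite -[Ordinal hk]inord_val /=.
do 12 (case: k hk => [|k] hk; first done).
by [].
Qed.

Lemma block (y4 y5 y6 y7 x4 x5 x6 x7 : int) :
  (2 %| y4 + y5 + y6 + y7)%Z -> (2 %| x4 + x5 + x6 + x7)%Z ->
  exists w, (y4 + y5) * x4 + (y5 - y4) * x5 + (y6 + y7) * x6 + (y7 - y6) * x7 = w * 2.
Proof.
move=> /dvdzP [m hm] /dvdzP [n hn].
have -> : y7 = m * 2 - y4 - y5 - y6 by lia.
have -> : x7 = n * 2 - x4 - x5 - x6 by lia.
exists (y4*x4 + (y5+y6)*(x4+x5) + y6*x6 - n*y6 + m*(2*n - x4 - x5) - n*(y4+y5+y6)).
ring.
Qed.

Lemma bQ_toQ (a : rat) u w : bQ (a *: toQ u) (toQ w) = a * (bN u w)%:~R.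
Proof.
rewrite /bQ /toQ -!scalemxAl mxE map_trmx -!map_mxM mxE /bN.
by [].
Qed.

Definition evf (l : seq nat) (n : nat) : int := if n \in l then 1 else 0.
Definition ev (l : seq nat) : 'rV[int]_12 := \row_(i < 12) evf l i.

Lemma half_int (b z : int) : (1 / 2 : rat) * b%:~R = z%:~R -> b = z * 2.
Proof.
move=> h; apply: (@intr_inj rat); rewrite intrM -h.
rewrite (_ : (2:int)%:~R = 2 :> rat) //; by field.
Qed.

Theorem lemma4p5 (delta : 'rV[int]_12) :
  (inN delta /\ bN delta delta = -4 /\ inNdual ((1 / 2 : rat) *: toQ delta)) <->
  (exists r : 'rV[int]_12, inN r /\ bN r r = -2 /\ delta = r + rho r).
Proof.
split.
- move=> [hN [hq hd]].
  have hdv : forall x, inN x -> (2 %| bF delta x)%Z.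
    move=> x hx; case: (hd x hx) => z; rewrite bQ_toQ => /half_int hz.
    by apply/dvdzP; exists z; rewrite -bN_formula.
  have T : forall l, inN (ev l) -> exists q, bF delta (ev l) = q * 2.
    by move=> l hl; apply/dvdzP; apply: hdv.
  have [a' ha] := T [::1] ltac:(by split; rewrite /ev !coord_row).
  have [b' hb] := T [::0] ltac:(by split; rewrite /ev !coord_row).
  have [s hs] := T [::4;5] ltac:(by split; rewrite /ev !coord_row).
  have [t ht] := T [::6;7] ltac:(by split; rewrite /ev !coord_row).
  have [u hu] := T [::4;6] ltac:(by split; rewrite /ev !coord_row).
  have [s' hs'] := T [::8;9] ltac:(by split; rewrite /ev !coord_row).
  have [t' ht'] := T [::10;11] ltac:(by split; rewrite /ev !coord_row).
  have [u' hu'] := T [::8;10] ltac:(by split; rewrite /ev !coord_row).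
  move: ha hb hs ht hu hs' ht' hu'; rewrite /bF /ev !coord_row // /evf /= => ha hb hs ht hu hs' ht' hu'.
  pose f := fun n : nat => match n with
    | 0 => c delta 0 - c delta 2
    | 1 => - c delta 3
    | 2 => a'
    | 3 => b' + c delta 3
    | 4 => c delta 4 + s
    | 5 => - s
    | 6 => c delta 6 + t
    | 7 => - t
    | 8 => c delta 8 + s'
    | 9 => - s'
    | 10 => c delta 10 + t'
    | _ => - t' end.
  exists (\row_(i < 12) f i); split; [|split].
  + by split; apply/dvdzP; [exists (- u) | exists (- u')]; rewrite !coord_row // /f /=; lia.
  + have e : delta = (\row_(i < 12) f i) + rho (\row_(i < 12) f i).
      by apply: eq12; rewrite ?coordD ?coord_rho // /rhoc ?coord_row // /f /=; lia.
    move: hq; rewrite {1 2}e bN_rho; lia.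
  + by apply: eq12; rewrite ?coordD ?coord_rho // /rhoc ?coord_row // /f /=; lia.
- move=> [r [hr [hq ->]]]; split; [|split].
  + rewrite /inN !coordD !coord_rho // /rhoc; split; apply/dvdzP;
      [exists (c r 5 + c r 7) | exists (c r 9 + c r 11)]; ring.
  + by rewrite bN_rho hq.
  + move=> x hx; case: hr => hr1 hr2; case: hx => hx1 hx2.
    have [w1 hw1] := @block _ _ _ _ _ _ _ _ hr1 hx1.
    have [w2 hw2] := @block _ _ _ _ _ _ _ _ hr2 hx2.
    have key : bF (r + rho r) x =
      2 * (c r 2 * c x 1 + (c r 1 + c r 3) * c x 0 + ((2 * c r 2 - c r 0) * c x 3 - c r 1 * c x 2))
      - ((c r 4 + c r 5) * c x 4 + (c r 5 - c r 4) * c x 5 + (c r 6 + c r 7) * c x 6 + (c r 7 - c r 6) * c x 7)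
      - ((c r 8 + c r 9) * c x 8 + (c r 9 - c r 8) * c x 9 + (c r 10 + c r 11) * c x 10 + (c r 11 - c r 10) * c x 11).
      by rewrite /bF !coordD !coord_rho // /rhoc; ring.
    exists (c r 2 * c x 1 + (c r 1 + c r 3) * c x 0 + ((2 * c r 2 - c r 0) * c x 3 - c r 1 * c x 2) - w1 - w2).
    rewrite bQ_toQ bN_formula key hw1 hw2.
    rewrite !(intrD, intrM, intrN, intrB); by field.
Qed.
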